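(* Let $n\ge1$ and let $A,B\in M_n(\mathbb C)$ be unitary. Then $|T(A,B)|\le n^{n^2/2}$, with equality if and only if $A$ and $B$ have no multiple eigenvalues, $A^n$ and $B^n$ are scalar matrices, and the orthonormal eigenbases of $A$ and of $B$ are mutually unbiased.
   Context: $M(A,B)\in M_{n^2}(\mathbb C)$ is the block matrix of $n\times n$ blocks whose $(i,j)$-th block is $A^{j-1}B^{i-1}$ ($i,j=1,\dots,n$), and $T(A,B)=\det M(A,B)$. Two orthonormal bases $u_1,\dots,u_n$ and $v_1,\dots,v_n$ of $\mathbb C^n$ are mutually unbiased if $|u_s^*v_t|^2=1/n$ for all $s,t$. (When $A$ has no multiple eigenvalues, its orthonormal eigenbasis is unique up to phases of the vectors, so mutual unbiasedness is well defined.) *)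

(* Defs.v *)
(* complex numbers as R[i] for R : realType (i.e. C). *)
From HB Require Import structures.
From mathcomp Require Import all_boot all_order all_algebra.
From mathcomp Require Import complex.
From mathcomp Require Import reals.
Set Implicit Arguments.
Unset Strict Implicit.
Unset Printing Implicit Defensive.
Import Order.TTheory GRing.Theory Num.Theory.
Local Open Scope ring_scope.
Local Open Scope sesquilinear_scope.

Definition Mblock (C : nzRingType) (n : nat) (A B : 'M[C]_n) :=
  @mxblock C n n (fun _ => n) (fun _ => n)
    (fun (i j : 'I_n) => A ^+ j *m B ^+ i).

Definition Tdet (C : comNzRingType) (n : nat) (A B : 'M[C]_n) : C :=
  \det (Mblock A B).

Definition no_multiple_eigenvalues (C : fieldType) (n : nat) (A : 'M[C]_n) :=
  forall a : C, ~ (('X - a%:P) ^+ 2 %| char_poly A).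

Definition orthonormal_eigenbasis (C : numClosedFieldType) (n : nat)
    (A U : 'M[C]_n) :=
  U \is unitarymx /\ forall s : 'I_n, exists d : C, A *m col s U = d *: col s U.

Definition mutually_unbiased (C : numClosedFieldType) (n : nat) (U V : 'M[C]_n) :=
  forall s t : 'I_n, `|(U ^t* *m V) s t| ^+ 2 = n%:R^-1.

Definition eigenbases_mutually_unbiased (C : numClosedFieldType) (n : nat)
    (A B : 'M[C]_n) :=
  exists U V : 'M[C]_n, [/\ orthonormal_eigenbasis A U,
                           orthonormal_eigenbasis B V & mutually_unbiased U V].

(* Main.v *)
Require Import Defs.
From HB Require Import structures.
From mathcomp Require Import all_boot all_order all_algebra.
From mathcomp Require Import complex.
From mathcomp Require Import reals.
From mathcomp Require Import ring zify.
Set Implicit Arguments.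
Unset Strict Implicit.
Unset Printing Implicit Defensive.
Import Order.TTheory GRing.Theory Num.Theory.
Local Open Scope ring_scope.
Local Open Scope sesquilinear_scope.
Section Basics.
Variable C : numClosedFieldType.

Lemma tM m n p (X : 'M[C]_(m,n)) (Y : 'M[C]_(n,p)) : (X *m Y)^t* = Y^t* *m X^t*.
Proof. by rewrite trmx_mul map_mxM. Qed.

Lemma unitL n (X : 'M[C]_n) : X \is unitarymx -> X^t* *m X = 1%:M.
Proof. by move/unitarymxP/mulmx1C. Qed.

Lemma t1 n : (1%:M : 'M[C]_n)^t* = 1%:M.
Proof. by rewrite trmx1 map_mx1. Qed.

Variable n' : nat.
Local Notation n := n'.+1.

Lemma unitX (X : 'M[C]_n) k : X \is unitarymx -> X ^+ k \is unitarymx.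
Proof.
move=> Xu; elim: k => [|k IH].
  by rewrite expr0; apply/unitarymxP; rewrite t1 mulmx1.
by rewrite exprS; apply: mul_unitarymx.
Qed.

Lemma tX (X : 'M[C]_n) k : (X ^+ k)^t* = (X^t*) ^+ k.
Proof.
elim: k => [|k IH]; first by rewrite !expr0 t1.
by rewrite exprS exprSr -IH; apply: tM.
Qed.

End Basics.

Section Blocks.
Variable C : numClosedFieldType.
Variable n : nat.
Variables A B : 'M[C]_n.
Definition F (i j : 'I_n) := A ^+ j *m B ^+ i.

Lemma Mblock_t : (Mblock A B)^t* =
  @mxblock C n n (fun _ => n) (fun _ => n) (fun j i => (F i j)^t*).
Proof. by apply/matrixP => s t; rewrite !mxE. Qed.

Lemma Gram : (Mblock A B)^t* *m Mblock A B =
  @mxblock C n n (fun _ => n) (fun _ => n)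
    (fun j k => \sum_i (F i j)^t* *m F i k).
Proof. by rewrite Mblock_t /Mblock mul_mxblock. Qed.

Lemma Gram' : Mblock A B *m (Mblock A B)^t* =
  @mxblock C n n (fun _ => n) (fun _ => n)
    (fun i k => \sum_j F i j *m (F k j)^t*).
Proof. by rewrite Mblock_t /Mblock mul_mxblock. Qed.

End Blocks.
Section GramCond.
Variable C : numClosedFieldType.
Variable n' : nat.
Local Notation n := n'.+1.
Variables A B : 'M[C]_n.
Hypotheses (Au : A \is unitarymx) (Bu : B \is unitarymx).

Lemma Fu i j : F A B i j \is unitarymx.
Proof. by apply: mul_unitarymx; apply: unitX. Qed.

Lemma Gram_diag j : \sum_(i < n) (F A B i j)^t* *m F A B i j = (n%:R : C)%:M.
Proof.
rewrite (eq_bigr (fun _ => 1%:M)) => [|i _]; last by rewrite unitL ?Fu.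
by rewrite sumr_const card_ord raddfMn.
Qed.

Lemma Gram_eq : ((Mblock A B)^t* *m Mblock A B = (n%:R : C)%:M) <->
  forall j k : 'I_n, j != k -> \sum_i (F A B i j)^t* *m F A B i k = 0.
Proof.
rewrite Gram -(mxdiagZ (p_ := fun _ : 'I_n => n)) /mxdiag.
rewrite -eq_mxblockP; split => H j k.
  by move=> jk; have := H j k; rewrite (negPf jk).
case: eqVneq => [<-|jk]; last exact: H.
by rewrite conform_mx_id Gram_diag.
Qed.

End GramCond.
Section Hadamard.
Variable C : numClosedFieldType.

Lemma AGM K (E : 'I_K -> C) : (forall i, 0 <= E i) ->
  \prod_i E i <= ((\sum_i E i) / K%:R) ^+ K ?= iff [forall i, forall j, E i == E j].
Proof.
move=> E0; have := @leif_AGM C 'I_K predT E.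
by rewrite cardT size_enum_ord => H; apply: H => i _.
Qed.

Lemma hadamard K (X : 'M[C]_K) (G := X^t* *m X) :
  [/\ `|\det X| ^+ 2 = \det G, \det G <= (\tr G / K%:R) ^+ K &
     (\det G = (\tr G / K%:R) ^+ K -> G = (\tr G / K%:R)%:M)].
Proof.
have GtG : G^t* = G by rewrite /G tM trmxCK.
have Gn : G \is normalmx by apply/normalmxP; rewrite GtG.
have Su : spectralmx G \is unitarymx := spectral_unitarymx G.
set S := spectralmx G in Su *; set d := spectral_diag G.
have GE : G = S^t* *m diag_mx d *m S.
  by have := orthomx_spectralP Gn; rewrite invmx_unitary.
have DE : diag_mx d = S *m G *m S^t*.
  by rewrite GE !mulmxA (unitarymxP Su) mul1mx -mulmxA (unitarymxP Su) mulmx1.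
have d_ge0 : forall k, 0 <= d 0 k.
  move=> k; have /matrixP/(_ k k) := DE; rewrite mxE eqxx mulr1n => ->.
  have -> : S *m G *m S^t* = (X *m S^t*)^t* *m (X *m S^t*).
    by rewrite tM trmxCK /G !mulmxA.
  rewrite mxE; apply: sumr_ge0 => l _; rewrite !mxE.
  by rewrite mulrC mul_conjC_ge0.
have detG : \det G = \prod_k d 0 k.
  rewrite GE !det_mulmx det_diag mulrAC -det_mulmx unitL // det1 mul1r.
  by [].
have trG : \tr G = \sum_k d 0 k.
  by rewrite GE mxtrace_mulC mulmxA (unitarymxP Su) mul1mx mxtrace_diag.
have agm := AGM d_ge0.
split.
- rewrite normCK /G det_mulmx det_map_mx det_tr mulrC. by [].
- by rewrite detG trG; case: agm.
- rewrite detG trG => Heq.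
  have /forallP Hall : [forall i, forall j, d 0 i == d 0 j].
    by case: agm => _ <-; apply/eqP.
  case: K X G GtG Gn S Su d GE DE d_ge0 detG trG agm Heq Hall => [|K] X G GtG Gn S Su d GE DE d_ge0 detG trG agm Heq Hall.
    by apply/matrixP => [[]].
  have dE : diag_mx d = (d 0 0)%:M.
    apply/matrixP => i j; rewrite !mxE; case: eqP => // _.
    by have /forallP/(_ 0)/eqP := Hall i.
  have -> : \sum_k d 0 k = (d 0 0) *+ K.+1.
    rewrite (eq_bigr (fun _ => d 0 0)) ?sumr_const ?card_ord // => i _.
    by have /forallP/(_ 0)/eqP := Hall i.
  rewrite -[d 0 0 *+ _]mulr_natr mulfK ?pnatr_eq0 //.
  by rewrite GE dE scalar_mxC -mulmxA unitL // mulmx1.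
Qed.

End Hadamard.
Section Diag.
Variable C : numClosedFieldType.

Lemma tdiag m (d : 'rV[C]_m) : (diag_mx d)^t* = diag_mx (map_mx Num.conj d).
Proof.
apply/matrixP => i j; rewrite !mxE eq_sym.
by case: eqP => [->|_]; rewrite ?mulr1n ?mulr0n ?rmorph0.
Qed.

Variable n' : nat.
Local Notation n := n'.+1.

Definition diagrep (A U : 'M[C]_n) (l : 'rV[C]_n) :=
  U \is unitarymx /\ A *m U = U *m diag_mx l.

Lemma eig_diagrep A U : orthonormal_eigenbasis A U -> exists l, diagrep A U l.
Proof.
case=> Uu H; have [f Hf] := fin_all_exists H.
exists (\row_s f s); split => //; apply/matrixP => i j.
move: (Hf j) => /matrixP/(_ i 0) E; rewrite !mxE in E.
rewrite mul_mx_diag !mxE [U i j * _]mulrC -E.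
by apply: eq_bigr => k _; rewrite !mxE.
Qed.

Lemma diagrep_eig A U l : diagrep A U l -> orthonormal_eigenbasis A U.
Proof.
case=> Uu H; split => // s; exists (l 0 s); apply/matrixP => i j.
move: H => /matrixP/(_ i s) E; rewrite mul_mx_diag !mxE in E.
rewrite !mxE ord1 mulrC -E.
by apply: eq_bigr => k _; rewrite !mxE.
Qed.

Lemma diagrepE A U l : diagrep A U l -> A = U *m diag_mx l *m U^t*.
Proof. by case=> Uu H; rewrite -H -mulmxA (unitarymxP Uu) mulmx1. Qed.

Lemma exists_diagrep A : A \is unitarymx -> exists U l, diagrep A U l.
Proof.
move=> Au.
have An : A \is normalmx by apply/normalmxP; rewrite (unitarymxP Au) unitL.
have Su := spectral_unitarymx A.
have AE := orthomx_spectralP An; rewrite invmx_unitary // in AE.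
set S := spectralmx A in Su AE *; set d := spectral_diag A in AE *.
exists (S^t*), d; split; first by rewrite trmxC_unitary.
by rewrite {1}AE mulmxtVK.
Qed.

Lemma diagrep_horner A U l p : diagrep A U l ->
  horner_mx A p = U *m diag_mx (map_mx (horner p) l) *m U^t*.
Proof.
move=> H; have [Uu _] := H; rewrite (diagrepE H).
have Ut : U^t* \is unitarymx by rewrite trmxC_unitary.
have := @horner_mx_uconjC C n' p (U^t*) (diag_mx l).
rewrite invmx_unitary // trmxCK horner_mx_diag => -> //.
exact: unitarymx_unit.
Qed.

Lemma diagrep_pow A U l k : diagrep A U l ->
  A ^+ k = U *m diag_mx (map_mx (fun x => x ^+ k) l) *m U^t*.
Proof.
move=> H; have := diagrep_horner ('X^k) H.
rewrite rmorphXn /= horner_mx_X => ->.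
by congr (_ *m diag_mx _ *m _); apply/matrixP => i j; rewrite !mxE hornerXn.
Qed.

Lemma diagrep_powU A U l k : diagrep A U l ->
  A ^+ k *m U = U *m diag_mx (map_mx (fun x => x ^+ k) l).
Proof.
move=> H; have [Uu _] := H.
by rewrite (diagrep_pow k H) -mulmxA unitL // mulmx1.
Qed.

Lemma eig_norm A U l : diagrep A U l -> A \is unitarymx ->
  forall k, l 0 k * (l 0 k)^* = 1.
Proof.
move=> H Au k; have [Uu _] := H.
have Dl : diag_mx l = U^t* *m A *m U.
  by rewrite (diagrepE H) !mulmxA unitL // mul1mx -mulmxA unitL // mulmx1.
have : diag_mx l \is unitarymx.
  by rewrite Dl; apply: mul_unitarymx; [apply: mul_unitarymx|]; rewrite ?trmxC_unitary.
move/unitarymxP; rewrite tdiag mulmx_diag => /matrixP/(_ k k).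
by rewrite !mxE eqxx !mulr1n.
Qed.

Lemma conj_formula B V m X s t : diagrep B V m ->
  (V^t* *m (\sum_(i < n) (B ^+ i)^t* *m X *m B ^+ i) *m V) s t =
  (V^t* *m X *m V) s t * \sum_(i < n) ((m 0 s)^* * m 0 t) ^+ i.
Proof.
move=> H; rewrite mulmx_sumr mulmx_suml summxE mulr_sumr.
apply: eq_bigr => i _.
have E1 : V^t* *m ((B ^+ i)^t* *m X *m B ^+ i) *m V =
   (diag_mx (map_mx (fun x => x ^+ i) m))^t* *m (V^t* *m X *m V) *m
     diag_mx (map_mx (fun x => x ^+ i) m).
  transitivity ((B ^+ i *m V)^t* *m X *m (B ^+ i *m V)).
    by rewrite tM !mulmxA.
  by rewrite (diagrep_powU i H) tM !mulmxA.
rewrite E1 tdiag mul_mx_diag mul_diag_mx !mxE rmorphXn /=.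
by rewrite exprMn; ring.
Qed.

Lemma diag_formula (U V : 'M[C]_n) (f : 'rV[C]_n) t : U \is unitarymx ->
  (V^t* *m (U *m diag_mx f *m U^t*) *m V) t t =
  \sum_k `|(U^t* *m V) k t| ^+ 2 * f 0 k.
Proof.
move=> Uu.
have -> : V^t* *m (U *m diag_mx f *m U^t*) *m V =
   (U^t* *m V)^t* *m diag_mx f *m (U^t* *m V) by rewrite !tM trmxCK !mulmxA.
rewrite mxE; apply: eq_bigr => k _.
rewrite mul_mx_diag !mxE normCK; ring.
Qed.

End Diag.
Section PolyFacts.
Variable C : numClosedFieldType.

Lemma geom0 (z : C) k : z ^+ k = 1 -> z != 1 -> \sum_(i < k) z ^+ i = 0.
Proof.
move=> zk z1; have := subrX1 z k; rewrite zk subrr => /esym /eqP.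
by rewrite mulf_eq0 subr_eq0 (negPf z1) /= => /eqP.
Qed.

Variable n : nat.

Lemma size_prod_but (l : 'I_n -> C) q :
  size (\prod_(k | k != q) ('X - (l k)%:P)) = n.
Proof.
rewrite size_prod => [|k _]; last by rewrite -size_poly_eq0 size_XsubC.
rewrite (eq_bigr (fun _ => 2%N)) => [|k _]; last by rewrite size_XsubC.
rewrite sum_nat_const.
have -> : #|[pred k | k != q]| = n.-1.
  by have := cardC1 q; rewrite card_ord => <-; apply: eq_card => k; rewrite !inE.
case: n q l => [[]//|m] q l /=; lia.
Qed.

Lemma horner_prod_but (l : 'I_n -> C) q x :
  (\prod_(k | k != q) ('X - (l k)%:P)).[x] = \prod_(k | k != q) (x - l k).
Proof. by rewrite horner_prod; apply: eq_bigr => k _; rewrite hornerXsubC. Qed.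

Lemma lagrange (l : 'I_n -> C) (c : 'I_n -> C) : injective l ->
  (forall p : {poly C}, (size p <= n)%N -> \sum_k c k * p.[l k] = 0) ->
  forall k, c k = 0.
Proof.
move=> linj H q.
have := H _ (eq_leq (size_prod_but l q)).
rewrite (bigD1 q) //= [X in _ + X = _]big1 ?addr0 => [|k kq].
  move/eqP; rewrite mulf_eq0 horner_prod_but => /orP[/eqP//|].
  rewrite prodf_seq_eq0 => /hasP[k _ /andP[kq]].
  by rewrite subr_eq0 => /eqP/linj kq'; rewrite kq' eqxx in kq.
rewrite horner_prod_but (bigD1 k) //= subrr mul0r mulr0 //.
Qed.

Lemma powsum0 (l : 'I_n -> C) (c : C) m : injective l ->
  (forall k, l k ^+ n = c) -> (forall k, l k != 0) -> (0 < m < n)%N ->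
  \sum_k l k ^+ m = 0.
Proof.
move=> linj lc l0 /andP[m0 mn].
have n0 : (0 < n)%N by apply: leq_ltn_trans mn.
pose k0 := Ordinal n0.
set s := [seq l k | k <- enum 'I_n].
have us : uniq s by rewrite map_inj_uniq ?enum_uniq.
have ss : size s = n by rewrite size_map size_enum_ord.
have Ssum : \sum_k l k ^+ m = \sum_(x <- s) x ^+ m by rewrite big_map big_enum.
pose p := 'X^n - c%:P : {poly C}.
have p0 : p != 0 by rewrite -size_poly_eq0 size_XnsubC.
have rootp x : root p x = (x ^+ n == c) by rewrite rootE !hornerE subr_eq0.
have inS x : x ^+ n = c -> x \in s.
  move=> xc; apply/negPn/negP => xs.
  have := max_poly_roots p0 (rs := x :: s).
  rewrite /= us xs rootp xc eqxx /= size_XnsubC // ss ltnn => H.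
  have Hall : all (root p) s by apply/allP => y /mapP[k _ ->]; rewrite rootp lc.
  by have := H Hall isT.
have Hz k : \sum_(x <- s) x ^+ m = (l k / l k0) ^+ m * \sum_(x <- s) x ^+ m.
  set z := l k / l k0.
  have z0 : z != 0 by rewrite mulf_neq0 ?invr_eq0.
  have zn : z ^+ n = 1 by rewrite exprMn exprVn !lc divff // -(lc k0) expf_neq0.
  have ut : uniq (map (fun y => z * y) s) by rewrite map_inj_uniq // => a b; apply: mulfI.
  have st : {subset map (fun y => z * y) s <= s}.
    move=> y /mapP[x /mapP[j _ ->] ->]; apply: inS.
    by rewrite exprMn zn mul1r lc.
  have [_ eqts] := uniq_min_size ut st (eq_leq (esym (size_map _ _))).
  rewrite -[LHS](perm_big _ (uniq_perm ut us eqts)) big_map mulr_sumr.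
  by apply: eq_bigr => x _; rewrite exprMn.
rewrite Ssum; apply/eqP/negPn/negP => S0.
have lm k : l k ^+ m = l k0 ^+ m.
  have zm : (l k / l k0) ^+ m = 1.
    have := Hz k; move/eqP; rewrite -subr_eq0 -{1}[\sum_(x <- s) x ^+ m]mul1r.
    by rewrite -mulrBl mulf_eq0 (negPf S0) orbF subr_eq0 => /eqP.
  rewrite exprMn exprVn in zm.
  by rewrite -(divfK (expf_neq0 m (l0 k0)) (l k ^+ m)) zm mul1r.
have q0 : 'X^m - (l k0 ^+ m)%:P != 0 :> {poly C}
  by rewrite -size_poly_eq0 size_XnsubC.
have := max_poly_roots q0 (rs := s).
rewrite us size_XnsubC // ss => H.
have Hall : all (root ('X^m - (l k0 ^+ m)%:P)) s.
  by apply/allP => y /mapP[k _ ->]; rewrite rootE !hornerE lm subrr.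
by have := H Hall isT; rewrite ltnS leqNgt mn.
Qed.

End PolyFacts.
Section Eigen.
Variable C : numClosedFieldType.
Variable n : nat.

Lemma ME1 (l : 'I_n -> C) : injective l ->
  forall a, ~ (('X - a%:P) ^+ 2 %| \prod_k ('X - (l k)%:P)).
Proof.
move=> linj a H.
have Xa0 : 'X - a%:P != 0 by apply: monic_neq0; apply: monicXsubC.
have : root (\prod_k ('X - (l k)%:P)) a.
  by rewrite -dvdp_XsubCl (dvdp_trans _ H) // expr2 dvdp_mulIl.
rewrite rootE horner_prod prodf_seq_eq0 => /hasP[q _ /=].
rewrite hornerXsubC subr_eq0 => /eqP aq.
move: H; rewrite (bigD1 q) //= -aq expr2 dvdp_mul2l // dvdp_XsubCl.
rewrite rootE horner_prod prodf_seq_eq0 => /hasP[k _ /andP[kq]].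
by rewrite hornerXsubC subr_eq0 aq => /eqP/linj kq'; rewrite kq' eqxx in kq.
Qed.

Lemma ME2 (l : 'I_n -> C) : ~ injective l ->
  exists a, ('X - a%:P) ^+ 2 %| \prod_k ('X - (l k)%:P).
Proof.
move=> ninj; have : ~~ injectiveb l by apply/negP => /injectiveP.
move=> /injectivePn[p [q pq lpq]].
exists (l p); rewrite (bigD1 p) //= (bigD1 q) /=; last by rewrite eq_sym.
by rewrite -lpq mulrA -expr2 dvdp_mulIl.
Qed.

Lemma char_poly_uconj (U D : 'M[C]_n) : U \is unitarymx ->
  char_poly (U *m D *m U^t*) = char_poly D.
Proof.
move=> Uu.
have E : map_mx polyC U *m char_poly_mx D *m map_mx polyC (U^t*) =
   char_poly_mx (U *m D *m U^t*).
  rewrite /char_poly_mx mulmxBr mulmxBl scalar_mxC -(mulmxA 'X%:M) -!map_mxM.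
  by rewrite (unitarymxP Uu) map_mx1 mulmx1.
rewrite /char_poly -E !det_mulmx mulrAC -det_mulmx -map_mxM (unitarymxP Uu).
by rewrite map_mx1 det1 mul1r.
Qed.

End Eigen.

Section Eigen2.
Variable C : numClosedFieldType.
Variable n' : nat.
Local Notation n := n'.+1.

Lemma CP (A U : 'M[C]_n) l : diagrep A U l ->
  char_poly A = \prod_k ('X - (l 0 k)%:P).
Proof.
move=> H; have [Uu _] := H; rewrite (diagrepE H) char_poly_uconj //.
rewrite char_poly_trig ?diag_mx_is_trig //.
by apply: eq_bigr => k _; rewrite mxE eqxx mulr1n.
Qed.

Lemma nomult_inj (A U : 'M[C]_n) l : diagrep A U l ->
  no_multiple_eigenvalues A <-> injective (fun k => l 0 k).
Proof.
move=> H; rewrite /no_multiple_eigenvalues (CP H); split.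
  move=> Hn; apply/injectiveP/negPn/negP => /injectivePn Hni.
  have [a Ha] : exists a, ('X - a%:P) ^+ 2 %| \prod_k ('X - (l 0 k)%:P).
    by apply: ME2 => /injectiveP; apply/negP/injectivePn.
  exact: Hn Ha.
by move=> linj a; apply: ME1.
Qed.

Lemma eig_pow (A U : 'M[C]_n) l c : diagrep A U l -> A ^+ n = c%:M ->
  forall k, l 0 k ^+ n = c.
Proof.
move=> H Ac k; have [Uu _] := H.
have := diagrep_powU n H; rewrite Ac => /(congr1 (mulmx (U^t*))).
rewrite mul_scalar_mx -scalemxAr unitL // mulmxA unitL // mul1mx => /matrixP/(_ k k).
by rewrite !mxE eqxx !mulr1n mulr1 => ->.
Qed.

End Eigen2.
Section Cond.
Variable C : numClosedFieldType.
Variable n' : nat.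
Local Notation n := n'.+1.

Definition condPQ (P Q : 'M[C]_n) := forall m, (0 < m < n)%N ->
  \sum_(i < n) (Q ^+ i)^t* *m P ^+ m *m Q ^+ i = 0.

Variables P Q : 'M[C]_n.
Hypothesis Qu : Q \is unitarymx.

Lemma QQ i : (Q ^+ i)^t* *m Q ^+ i = 1%:M.
Proof. by apply: unitL; apply: unitX. Qed.

Lemma horner_sum (p : {poly C}) : (size p <= n)%N ->
  horner_mx P p = \sum_(d < n) p`_d *: P ^+ d.
Proof.
move=> sp.
have pE : p = \poly_(i < n) p`_i.
  apply/polyP => i; rewrite coef_poly; case: ltnP => // ni.
  by rewrite nth_default // (leq_trans sp).
rewrite {1}pE poly_def rmorph_sum; apply: eq_bigr => d _.
by rewrite -mul_polyC rmorphM /= horner_mx_C rmorphXn /= horner_mx_X [_ * _]mul_scalar_mx.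
Qed.

Lemma K1 : condPQ P Q -> forall p : {poly C}, (size p <= n)%N ->
  \sum_(i < n) (Q ^+ i)^t* *m horner_mx P p *m Q ^+ i = (n%:R * p`_0)%:M.
Proof.
move=> cPQ p sp; rewrite horner_sum //.
have -> : \sum_(i < n) (Q ^+ i)^t* *m (\sum_(d < n) p`_d *: P ^+ d) *m Q ^+ i =
   \sum_(d < n) p`_d *: \sum_(i < n) (Q ^+ i)^t* *m P ^+ d *m Q ^+ i.
  rewrite (eq_bigr (fun i : 'I_n => \sum_(d < n) p`_d *: ((Q ^+ i)^t* *m P ^+ d *m Q ^+ i))) => [|i _].
    by rewrite exchange_big; apply: eq_bigr => d _; rewrite scaler_sumr.
  rewrite mulmx_sumr mulmx_suml; apply: eq_bigr => d _.
  by rewrite -scalemxAr -scalemxAl.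
rewrite big_ord_recl [X in _ + X]big1 ?addr0 => [|d _]; last first.
  by rewrite cPQ ?scaler0 //= ltnS ltn_ord.
rewrite (eq_bigr (fun _ => 1%:M)) => [|i _]; last by rewrite expr0 mulmx1 QQ.
by rewrite sumr_const card_ord -scaler_nat scalerA scalemx1 mulrC.
Qed.

Lemma K2 : condPQ P Q -> (1 < n)%N -> P *m Q ^+ n = Q ^+ n *m P.
Proof.
move=> cPQ n1.
pose f (i : nat) := (Q ^+ i)^t* *m P *m Q ^+ i.
have S0 : \sum_(i < n) f i = 0 by have := cPQ 1%N; rewrite expr1 n1; apply.
have S1 : \sum_(i < n) f i.+1 = 0.
  transitivity (Q^t* *m (\sum_(i < n) f i) *m Q); last by rewrite S0 mulmx0 mul0mx.
  rewrite mulmx_sumr mulmx_suml; apply: eq_bigr => i _.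
  by rewrite /f exprSr tM !mulmxA.
have E1 : \sum_(i < n.+1) f i = f 0%N + \sum_(i < n) f i.+1 by rewrite big_ord_recl.
have E2 : \sum_(i < n.+1) f i = \sum_(i < n) f i + f n by rewrite big_ord_recr.
have := etrans (esym E1) E2.
rewrite S0 S1 add0r addr0 /f expr0 t1 mul1mx mulmx1 => fn.
have Qn := unitX n Qu.
by rewrite [in RHS]fn !mulmxA (unitarymxP Qn) mul1mx.
Qed.

Lemma K3 : condPQ P Q -> P ^+ n *m Q = Q *m P ^+ n -> is_scalar_mx (P ^+ n).
Proof.
move=> cPQ comm.
set p := char_poly P.
set h := \poly_(i < n) p`_i.
have pE : p = 'X^n + h.
  apply/polyP => i; rewrite coefD coefXn coef_poly.
  have sp : size p = n.+1 by rewrite size_char_poly.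
  case: (ltngtP i n) => [lt|gt|->].
  - by rewrite add0r.
  - by rewrite add0r nth_default // sp.
  by rewrite addr0 -[n]/(n.+1.-1) -sp -lead_coefE; apply/monicP/char_poly_monic.
have hP : horner_mx P h = - P ^+ n.
  have := Cayley_Hamilton P; rewrite -/p pE rmorphD rmorphXn /= horner_mx_X.
  by move/eqP; rewrite addrC addr_eq0 => /eqP.
have := K1 cPQ (size_poly n (fun i => p`_i)); rewrite -/h hP.
have cm i : (Q ^+ i)^t* *m - P ^+ n *m Q ^+ i = - P ^+ n.
  have ci : P ^+ n *m Q ^+ i = Q ^+ i *m P ^+ n by apply: commrX.
  by rewrite mulmxN mulNmx -mulmxA ci mulmxA QQ mul1mx.
rewrite (eq_bigr _ (fun (i : 'I_n) _ => cm i)) sumr_const card_ord => E.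
apply/is_scalar_mxP; exists (- h`_0).
have nz : (n%:R : C) != 0 by rewrite pnatr_eq0.
have E' : P ^+ n *+ n = - (n%:R * h`_0)%:M by rewrite -E mulNrn opprK.
apply/matrixP => i j; move/matrixP/(_ i j): E'.
rewrite -scaler_nat !mxE => E2.
have := congr1 (fun y => y / n%:R) E2; rewrite /= [_ * (P ^+ n) i j]mulrC mulfK // => ->.
case: (i == j); rewrite ?mulr1n ?mulr0n ?oppr0 ?mul0r //.
by rewrite mulNr mulrC mulrA mulVf // mul1r.
Qed.

End Cond.
Section Forward.
Variable C : numClosedFieldType.
Variable n' : nat.
Local Notation n := n'.+1.

Lemma l_neq0 (A U : 'M[C]_n) l k : diagrep A U l -> A \is unitarymx -> l 0 k != 0.
Proof.
move=> H Au; apply/eqP => l0; have := eig_norm H Au k.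
by rewrite l0 mul0r => /eqP; rewrite eq_sym oner_eq0.
Qed.

Lemma cond_inj (A B U : 'M[C]_n) l : A \is unitarymx -> B \is unitarymx ->
  condPQ A B -> diagrep A U l -> injective (fun k => l 0 k).
Proof.
move=> Au Bu cAB H p q lpq; apply/eqP/negPn/negP => pq.
set h := \prod_(k | k != q) ('X - (l 0 k)%:P).
have sh : size h = n by apply: size_prod_but.
have hA : horner_mx A h = 0.
  rewrite (diagrep_horner h H).
  have -> : map_mx (horner h) l = 0.
    apply/matrixP => i k; rewrite !mxE ord1 horner_prod_but.
    have [kq|kq] := eqVneq k q.
      by rewrite (bigD1 p) //= kq -lpq subrr mul0r.
    by rewrite (bigD1 k) //= subrr mul0r.
  by rewrite linear0 mulmx0 mul0mx.
have := K1 Bu cAB (eq_leq sh).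
rewrite hA big1 => [|i _]; last by rewrite mulmx0 mul0mx.
move/matrixP/(_ 0 0); rewrite !mxE eqxx mulr1n => /esym/eqP.
rewrite mulf_eq0 pnatr_eq0 /= -horner_coef0 horner_prod_but.
rewrite prodf_seq_eq0 => /hasP[k _ /andP[_]].
by rewrite sub0r oppr_eq0 (negPf (l_neq0 k H Au)).
Qed.

Lemma Wnorm (U V : 'M[C]_n) k : U \is unitarymx -> V \is unitarymx ->
  \sum_t `|(U^t* *m V) k t| ^+ 2 = 1.
Proof.
move=> Uu Vu.
have Wu : U^t* *m V \is unitarymx by rewrite mul_unitarymx ?trmxC_unitary.
move/unitarymxP/matrixP/(_ k k): Wu; rewrite !mxE eqxx mulr1n => <-.
by apply: eq_bigr => t _; rewrite normCK !mxE.
Qed.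

Lemma cond_mu (A B U V : 'M[C]_n) l m : A \is unitarymx -> B \is unitarymx ->
  condPQ A B -> diagrep A U l -> diagrep B V m -> injective (fun k => l 0 k) ->
  mutually_unbiased U V.
Proof.
move=> Au Bu cAB HA HB linj.
have [Uu _] := HA; have [Vu _] := HB.
set W := U^t* *m V.
have S1 : forall h : {poly C}, (size h <= n)%N -> forall t,
    \sum_k `|W k t| ^+ 2 * h.[l 0 k] = h`_0.
  move=> h sh t.
  have := conj_formula (horner_mx A h) t t HB.
  have VcV : forall a, V^t* *m a%:M *m V = a%:M.
    by move=> a; rewrite scalar_mxC -mulmxA unitL // mulmx1.
  rewrite K1 // VcV mxE eqxx mulr1n.
  have -> : (m 0 t)^* * m 0 t = 1 by rewrite mulrC (eig_norm HB Bu).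
  rewrite (eq_bigr (fun _ => 1)) => [|i _]; last by rewrite expr1n.
  rewrite sumr_const card_ord (diagrep_horner h HA) diag_formula // => E.
  have nz : (n%:R : C) != 0 by rewrite pnatr_eq0.
  apply: (mulIf nz); rewrite [RHS]mulrC E -[1 *+ n]mulr_natr mul1r.
  by apply: (congr1 (fun x => x * _)); apply: eq_bigr => k _; rewrite [X in _ = _ * X]mxE.
have S2 : forall h : {poly C}, (size h <= n)%N ->
    \sum_k h.[l 0 k] = n%:R * h`_0.
  move=> h sh.
  transitivity (\sum_t \sum_k `|W k t| ^+ 2 * h.[l 0 k]).
    rewrite exchange_big; apply: eq_bigr => k _.
    by rewrite -mulr_suml Wnorm // mul1r.
  by rewrite (eq_bigr _ (fun t _ => S1 h sh t)) sumr_const card_ord mulr_natl.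
move=> s t.
have nz : (n%:R : C) != 0 by rewrite pnatr_eq0.
apply/eqP; rewrite -subr_eq0; apply/eqP.
apply: (lagrange (c := fun k => `|W k t| ^+ 2 - n%:R^-1) linj) => h sh.
under eq_bigr do rewrite mulrBl.
rewrite sumrB S1 // -mulr_sumr S2 // mulrA mulVf // mul1r subrr //.
Qed.
End Forward.
Section Backward.
Variable C : numClosedFieldType.
Variable n' : nat.
Local Notation n := n'.+1.

Lemma conj_pow (x : C) j k : x * x^* = 1 -> (j <= k)%N ->
  (x ^+ j)^* * x ^+ k = x ^+ (k - j).
Proof.
move=> x1 jk; rewrite -(subnKC jk) exprD mulrA rmorphXn /= -exprMn.
by rewrite [x^* * x]mulrC x1 expr1n mul1r addKn.
Qed.

Lemma diag_pair (A U : 'M[C]_n) l j k : diagrep A U l ->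
  (A ^+ j)^t* *m A ^+ k =
  U *m diag_mx (\row_x ((l 0 x ^+ j)^* * l 0 x ^+ k)) *m U^t*.
Proof.
move=> H; have [Uu _] := H.
rewrite (diagrep_pow j H) (diagrep_pow k H) !tM trmxCK tdiag.
rewrite !mulmxA -[U *m _ *m _ *m U]mulmxA unitL // mulmx1 -!mulmxA.
rewrite [diag_mx _ *m (diag_mx _ *m _)]mulmxA mulmx_diag.
by congr (U *m (diag_mx _ *m _)); apply/matrixP => i x; rewrite !mxE.
Qed.

Lemma pair_sum (A U : 'M[C]_n) l a j k : A \is unitarymx -> diagrep A U l ->
  injective (fun x => l 0 x) -> A ^+ n = a%:M -> (j < n)%N -> (k < n)%N -> j != k ->
  \sum_x (l 0 x ^+ j)^* * l 0 x ^+ k = 0.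
Proof.
move=> Au H linj Aa jn kn jk.
have pw := eig_pow H Aa.
have nz x := l_neq0 x H Au.
have lt i i' : (i < i')%N -> (i' < n)%N ->
    \sum_x (l 0 x ^+ i)^* * l 0 x ^+ i' = 0.
  move=> ii' i'n.
  rewrite (eq_bigr (fun x => l 0 x ^+ (i' - i))) => [|x _]; last first.
    by rewrite conj_pow ?(eig_norm H Au) // ltnW.
  apply: (powsum0 linj pw nz).
  by rewrite subn_gt0 ii' /= (leq_ltn_trans (leq_subr _ _) i'n).
case: (ltngtP j k) => [jk'|kj|e]; first exact: lt.
  rewrite -[LHS]conjCK rmorph_sum /=.
  rewrite (eq_bigr (fun x => (l 0 x ^+ k)^* * l 0 x ^+ j)) => [|x _].
    by rewrite lt // rmorph0.
  by rewrite rmorphM /= conjCK mulrC.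
by rewrite e eqxx in jk.
Qed.

Lemma back (A B U V : 'M[C]_n) l m a b : A \is unitarymx -> B \is unitarymx ->
  diagrep A U l -> diagrep B V m ->
  injective (fun x => l 0 x) -> injective (fun x => m 0 x) ->
  A ^+ n = a%:M -> B ^+ n = b%:M -> mutually_unbiased U V ->
  forall j k : 'I_n, j != k -> \sum_(i < n) (F A B i j)^t* *m F A B i k = 0.
Proof.
move=> Au Bu HA HB linj minj Aa Bb mu j k jk.
have [Uu _] := HA; have [Vu _] := HB.
set Z := \sum_(i < n) _.
have ZE : Z = \sum_(i < n) (B ^+ i)^t* *m ((A ^+ j)^t* *m A ^+ k) *m B ^+ i.
  by apply: eq_bigr => i _; rewrite /F tM !mulmxA.
suff VZV : V^t* *m Z *m V = 0.
  have -> : Z = V *m (V^t* *m Z *m V) *m V^t*.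
    by rewrite !mulmxA (unitarymxP Vu) mul1mx mulmxtVK.
  by rewrite VZV mulmx0 mul0mx.
apply/matrixP => s t; rewrite ZE (conj_formula _ _ _ HB) [RHS]mxE.
have [st|st] := eqVneq s t; last first.
  rewrite (geom0 (k := n)) ?mulr0 //.
    have cX (x : C) i : (x^*) ^+ i = (x ^+ i)^* by rewrite rmorphXn.
    have ms := eig_pow HB Bb s; have mt := eig_pow HB Bb t.
    rewrite exprMn cX ms mt -ms -cX -exprMn mulrC (eig_norm HB Bu) expr1n //.
  apply/eqP => e; move: st; rewrite -(inj_eq minj) /=; apply/negP; rewrite negbK.
  have := congr1 (fun y => m 0 s * y) e.
  by rewrite mulr1 mulrA (eig_norm HB Bu) mul1r => ->.
rewrite st (diag_pair j k HA) diag_formula //.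
rewrite (eq_bigr (fun x => n%:R^-1 * ((l 0 x ^+ j)^* * l 0 x ^+ k))) => [|x _].
  by rewrite -mulr_sumr (pair_sum Au HA linj Aa) ?ltn_ord // !mulr0 mul0r.
by rewrite mu mxE.
Qed.

End Backward.
Section Main.
Variable C : numClosedFieldType.

Lemma comm_adj m (X Z : 'M[C]_m) : X \is unitarymx -> X *m Z = Z *m X ->
  X^t* *m Z = Z *m X^t*.
Proof.
move=> Xu E.
rewrite -[Z *m X^t*]mul1mx -(unitL Xu) -!mulmxA [X *m (Z *m _)]mulmxA E.
by rewrite -!mulmxA (unitarymxP Xu) mulmx1.
Qed.

Lemma sc k (X : 'M[C]_k.+1) : k = 0%N -> is_scalar_mx X.
Proof.
case: k X => [|k] X // _; apply/is_scalar_mxP; exists (X 0 0); exact: mx11_scalar.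
Qed.

Variable n' : nat.
Local Notation n := n'.+1.
Variables A B : 'M[C]_n.
Hypotheses (Au : A \is unitarymx) (Bu : B \is unitarymx).

Lemma Gram'_eq : Mblock A B *m (Mblock A B)^t* = (n%:R : C)%:M ->
  forall i k : 'I_n, i != k -> \sum_j F A B i j *m (F A B k j)^t* = 0.
Proof.
rewrite Gram' -(mxdiagZ (p_ := fun _ : 'I_n => n)) /mxdiag.
by rewrite -eq_mxblockP => H i k ik; have := H i k; rewrite (negPf ik).
Qed.

Lemma gram_swap : (Mblock A B)^t* *m Mblock A B = (n%:R : C)%:M ->
  Mblock A B *m (Mblock A B)^t* = (n%:R : C)%:M.
Proof.
move=> G.
have nz : (n%:R : C) != 0 by rewrite pnatr_eq0.
have : (n%:R^-1 *: (Mblock A B)^t*) *m Mblock A B = 1%:M.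
  by rewrite -scalemxAl G scale_scalar_mx mulVf.
move/mulmx1C; rewrite -scalemxAr => /(congr1 (fun M => n%:R *: M)).
by rewrite scalerA mulfV // scale1r => ->; rewrite scalemx1.
Qed.

Lemma forward : (forall j k : 'I_n, j != k -> \sum_i (F A B i j)^t* *m F A B i k = 0) ->
  [/\ no_multiple_eigenvalues A, no_multiple_eigenvalues B,
         is_scalar_mx (A ^+ n), is_scalar_mx (B ^+ n)
       & eigenbases_mutually_unbiased A B].
Proof.
move=> Gc.
have G : (Mblock A B)^t* *m Mblock A B = (n%:R : C)%:M by apply/Gram_eq.
have G' := Gram'_eq (gram_swap G).
have cAB : condPQ A B.
  move=> mm /andP[m0 mn].
  have ne : (0 : 'I_n) != Ordinal mn by rewrite -(inj_eq val_inj) /= eq_sym -lt0n m0.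
  rewrite -[RHS](Gc _ _ ne); apply: eq_bigr => i _; rewrite /F expr0 mul1mx mulmxA //.
have Atu : A^t* \is unitarymx by rewrite trmxC_unitary.
have cBA : condPQ B (A^t*).
  move=> mm /andP[m0 mn].
  have ne : Ordinal mn != (0 : 'I_n) by rewrite -(inj_eq val_inj) /= -lt0n m0.
  rewrite -[RHS](G' _ _ ne); apply: eq_bigr => j _; rewrite /F expr0 mulmx1.
  by rewrite -tX trmxCK.
have [U [l HA]] := exists_diagrep Au.
have [V [m HB]] := exists_diagrep Bu.
have linj := cond_inj Au Bu cAB HA.
have minj := cond_inj Bu Atu cBA HB.
split.
- exact/(nomult_inj HA).
- exact/(nomult_inj HB).
- have [n0|n1] := eqVneq n' 0%N; first exact: sc.
  have n1' : (1 < n)%N by rewrite ltnS lt0n.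
  apply: (K3 Bu cAB).
  have E := K2 Atu cBA n1'.
  have Yu : (A ^+ n)^t* \is unitarymx by rewrite trmxC_unitary unitX.
  have := comm_adj Yu; rewrite trmxCK; apply; by rewrite tX.
- have [n0|n1] := eqVneq n' 0%N; first exact: sc.
  have n1' : (1 < n)%N by rewrite ltnS lt0n.
  apply: (K3 Atu cBA).
  have E := K2 Bu cAB n1'.
  by rewrite (comm_adj Au E).
- exists U, V; split; [exact: diagrep_eig HA| exact: diagrep_eig HB|].
  exact: cond_mu Au Bu cAB HA HB linj.
Qed.

Lemma backward :
  [/\ no_multiple_eigenvalues A, no_multiple_eigenvalues B,
         is_scalar_mx (A ^+ n), is_scalar_mx (B ^+ n)
       & eigenbases_mutually_unbiased A B] ->
  (forall j k : 'I_n, j != k -> \sum_i (F A B i j)^t* *m F A B i k = 0).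
Proof.
case=> nmA nmB /is_scalar_mxP[a Aa] /is_scalar_mxP[b Bb] [U [V [eU eV mu]]].
have [l HA] := eig_diagrep eU; have [m HB] := eig_diagrep eV.
have linj := (nomult_inj HA).1 nmA; have minj := (nomult_inj HB).1 nmB.
exact: back Au Bu HA HB linj minj Aa Bb mu.
Qed.

End Main.

Lemma main_gen (C : numClosedFieldType) n' (A B : 'M[C]_n'.+1) :
  A \is unitarymx -> B \is unitarymx ->
  `|Tdet A B| <= sqrtC (n'.+1%:R : C) ^+ (n'.+1 * n'.+1) /\
  (`|Tdet A B| = sqrtC (n'.+1%:R : C) ^+ (n'.+1 * n'.+1) <->
     [/\ no_multiple_eigenvalues A, no_multiple_eigenvalues B,
         is_scalar_mx (A ^+ n'.+1), is_scalar_mx (B ^+ n'.+1)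
       & eigenbases_mutually_unbiased A B]).
Proof.
move=> Au Bu; rewrite /Tdet.
have [hE hle heq] := hadamard (Mblock A B).
set G := (Mblock A B)^t* *m Mblock A B in hE hle heq *.
set K := (\sum_(i < n'.+1) n'.+1)%N in hE hle heq *.
have hK : K = (n'.+1 * n'.+1)%N by rewrite /K sum_nat_const card_ord.
have Knz : (K%:R : C) != 0 by rewrite pnatr_eq0 hK.
have trG : \tr G = n'.+1%:R * K%:R.
  rewrite /G Gram mxtrace_mxblock.
  rewrite (eq_bigr (fun _ => n'.+1%:R *+ n'.+1)) => [|j _]; last first.
    by rewrite Gram_diag // mxtrace_scalar.
  by rewrite sumr_const card_ord hK -mulrnA mulr_natr.
have mu : \tr G / K%:R = n'.+1%:R by rewrite trG mulfK.
rewrite mu in hle heq.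
have s0 : 0 <= sqrtC (n'.+1%:R : C) ^+ (n'.+1 * n'.+1).
  by rewrite exprn_ge0 // sqrtC_ge0 ler0n.
have s2 : (sqrtC (n'.+1%:R : C) ^+ (n'.+1 * n'.+1)) ^+ 2 = n'.+1%:R ^+ K.
  by rewrite -exprM mulnC exprM sqrtCK hK.
have EQ : `|\det (Mblock A B)| = sqrtC (n'.+1%:R : C) ^+ (n'.+1 * n'.+1) <->
    G = (n'.+1%:R : C)%:M.
  split => [e|e].
    by apply: heq; rewrite -hE e s2.
  apply/eqP; rewrite -(eqrXn2 (isT : (0 < 2)%N)) ?normr_ge0 //.
  by rewrite hE s2 e det_scalar.
split.
  rewrite -(ler_pXn2r (isT : (0 < 2)%N)) ?nnegrE ?normr_ge0 //.
  by rewrite hE s2.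
rewrite EQ /G Gram_eq //; split; [exact: forward | exact: backward].
Qed.

Theorem mainTheorem8 (R : realType) (n : nat) (A B : 'M[R[i]]_n) :
  (1 <= n)%N -> A \is unitarymx -> B \is unitarymx ->
  `|Tdet A B| <= sqrtC (n%:R : R[i]) ^+ (n * n) /\
  (`|Tdet A B| = sqrtC (n%:R : R[i]) ^+ (n * n) <->
     [/\ no_multiple_eigenvalues A, no_multiple_eigenvalues B,
         is_scalar_mx (A ^+ n), is_scalar_mx (B ^+ n)
       & eigenbases_mutually_unbiased A B]).
Proof.
case: n A B => [//|n'] A B _; exact: main_gen.
Qed.
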